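(* Let $P$ be a rooted tree poset with $n$ elements. Then $\deg(\partial)\ge n$, with equality if and only if $P$ is a rooted star poset.
   Context: Labelings of $P$ are bijections $P\to[n]$; $\Lambda(P)$ is the set of labelings. Promotion $\partial:\Lambda(P)\to\Lambda(P)$: for non-maximal $x$, the $L$-successor of $x$ is the element greater than $x$ with minimal label; the promotion chain is $v_1=L^{-1}(1)$, $v_{i+1}$ the $L$-successor of $v_i$, ending at the first maximal $v_m$; $\partial(L)(x)=L(x)-1$ off the chain, $\partial(L)(v_i)=L(v_{i+1})-1$ for $i<m$, $\partial(L)(v_m)=n$. A rooted tree poset is a connected poset in which each element is covered by at most one element. A rooted star poset is a rooted tree poset whose root covers every other element. $\deg(f)=\frac{1}{|X|}\sum_{x\in X}|f^{-1}(x)|^2$ for $f:X\to X$, here with $X=\Lambda(P)$. *)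

(* Defs.v *)
From mathcomp Require Import all_boot all_order all_algebra.
Set Implicit Arguments. Unset Strict Implicit. Unset Printing Implicit Defensive.
Import Order.TTheory GRing.Theory Num.Theory.
Local Open Scope order_scope.

Section Promotion.
Context {d : Order.disp_t} (P : finPOrderType d).

Definition covers (x y : P) : bool :=
  (x < y) && [forall z : P, ~~ ((x < z) && (z < y))].

Definition maximal (x : P) : bool := [forall y : P, ~~ (x < y)].

Definition connected_poset : bool :=
  (0 < #|P|)%N && [forall x : P, forall y : P, connect (fun a b : P => a >=< b) x y].

Definition rooted_tree_poset : bool :=
  connected_poset &&
  [forall x : P, forall y : P, forall z : P, covers x y && covers x z ==> (y == z)].

Definition rooted_star_poset : bool :=
  rooted_tree_poset &&
  [exists r : P, [forall x : P, (x != r) ==> covers x r]].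

(* labelings P -> [n], with [n] encoded as 'I_n = {0,...,n-1} *)
Definition label_fun := {ffun P -> 'I_#|P|}.

Definition labelings : {set label_fun} := [set L : label_fun | injectiveb L].

(* L-successor of x: the element greater than x with minimal label;
   None iff x is maximal *)
Definition succ (L : label_fun) (x : P) : option P :=
  [pick y : P | (x < y) && [forall z : P, (x < z) ==> (L y <= L z)%N]].

(* the chain x, succ x, succ (succ x), ... up to the first maximal element
   (fuel k suffices once k >= #|P|, as the chain strictly increases) *)
Fixpoint chain_from (L : label_fun) (k : nat) (x : P) : seq P :=
  x :: match k, succ L x with
       | k'.+1, Some y => chain_from L k' y
       | _, _ => [::]
       end.

(* the promotion chain v_1, ..., v_m, starting at the element labelled 1 *)
Definition promotion_chain (L : label_fun) : seq P :=
  if [pick x : P | nat_of_ord (L x) == 0%N] is Some v1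
  then chain_from L #|P| v1 else [::].

(* the promoted labeling (values as natural numbers, 0-based) *)
Definition promotion (L : label_fun) (x : P) : nat :=
  let c := promotion_chain L in
  if x \in c then
    let i := index x c in
    if (i.+1 < size c)%N then (L (nth x c i.+1)).-1 else (#|P|).-1
  else (L x).-1.

Definition promotion_fiber (L : label_fun) : nat :=
  #|[set L' in labelings | [forall x : P, promotion L' x == nat_of_ord (L x)]]|.

Definition deg_promotion : rat :=
  ((\sum_(L in labelings) (promotion_fiber L ^ 2)%N)%:R / (#|labelings|)%:R)%R.

End Promotion.

(* Main.v *)
Require Import Defs.
From mathcomp Require Import all_boot all_order all_algebra.
From mathcomp Require Import zify.
Import Order.TTheory GRing.Theory Num.Theory.

Module Helpers.
Set Implicit Arguments. Unset Strict Implicit. Unset Printing Implicit Defensive.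

Section Gen.
Context {d : Order.disp_t} (P : finPOrderType d).
Local Notation n := #|P|.
Implicit Types (L : label_fun P) (x y z : P).

Lemma succ_lt L x y : succ L x = Some y -> (x < y)%O.
Proof. rewrite /succ; case: pickP => // z /andP[h _] [<-]; exact h. Qed.

Lemma succ_min L x y : succ L x = Some y -> forall z, (x < z)%O -> L y <= L z.
Proof.
rewrite /succ; case: pickP => // w /andP[_ /forallP h] [<-] z xz.
exact: (implyP (h z) xz).
Qed.

Lemma succ_None L x : succ L x = None -> maximal x.
Proof.
rewrite /succ; case: pickP => // h _; apply/forallP => y; apply/negP => xy.
case: (@arg_minnP _ y (fun z => (x < z)%O) (fun z => nat_of_ord (L z)) xy) => m xm mm.
move: (h m); rewrite xm /=; move/negbT/negP; apply; apply/forallP => z; apply/implyP => xz.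
exact: mm.
Qed.

Lemma max_succ L x : maximal x -> succ L x = None.
Proof.
move/forallP=> h; rewrite /succ; case: pickP => // y /andP[xy _].
by move: (h y); rewrite xy.
Qed.

Lemma succ_Some L x y : injective L -> (x < y)%O ->
  (forall z, (x < z)%O -> L y <= L z) -> succ L x = Some y.
Proof.
move=> inj xy hm; case e: (succ L x) => [w|].
  have := succ_min e (y:=w) xy => h1; have := hm w (succ_lt e) => h2.
  congr Some; apply: inj; apply: val_inj; apply/eqP; by rewrite eqn_leq h1 h2.
by have /forallP/(_ y) := succ_None e; rewrite xy.
Qed.

Definition srel L := fun a b => succ L a == Some b.

Lemma chain_path L k x : path (srel L) x (behead (chain_from L k x)).
Proof.
elim: k x => [|k IH] x //=.
case e: (succ L x) => [y|] //.
rewrite /=.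
have -> : chain_from L k y = y :: behead (chain_from L k y) by case: k {IH}.
by apply/andP; split; [rewrite /srel e | exact: IH].
Qed.

Lemma chain_end L k x : succ L (last x (behead (chain_from L k x))) = None \/
   size (behead (chain_from L k x)) = k.
Proof.
elim: k x => [|k IH] x /=; first by right.
case e: (succ L x) => [y|] /=; last by left.
have := IH y; case: k {IH} => [|k] /=; first by right.
by case => [->|->]; [left|right].
Qed.

Lemma chain_eq L k x t : path (srel L) x t -> succ L (last x t) = None ->
  size t <= k -> chain_from L k x = x :: t.
Proof.
elim: t k x => [|y t IH] k x /=.
  by move=> _ e _; case: k => [|k] //=; rewrite e.
move=> /andP[/eqP e pt] el; case: k => [|k] //= sk.
by rewrite e (IH k y pt el sk).
Qed.

Lemma srel_lt L : subrel (srel L) (fun a b => (a < b)%O).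
Proof. by move=> a b /eqP; apply: succ_lt. Qed.


Lemma zero_ex L : 0 < n -> injective L -> exists v, nat_of_ord (L v) = 0.
Proof.
move=> hn inj; have := inj_card_onto inj _ (Ordinal hn).
rewrite card_ord => /(_ (leqnn _)) /codomP [v hv]; exists v; by rewrite -hv.
Qed.

Lemma pc_def L v : injective L -> nat_of_ord (L v) = 0 ->
  promotion_chain L = chain_from L n v.
Proof.
move=> inj hv; rewrite /promotion_chain; case: pickP => [w /eqP hw|/(_ v)].
  by have -> : w = v by apply: inj; apply: val_inj; rewrite /= hw hv.
by rewrite hv eqxx.
Qed.

Lemma uniq_size (s : seq P) : uniq s -> size s <= n.
Proof. by move/card_uniqP => <-; exact: max_card. Qed.

Lemma sorted_lt_uniq (s : seq P) : sorted (fun a b => (a < b)%O) s -> uniq s.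
Proof. apply: sorted_uniq; [exact: lt_trans | exact: ltxx]. Qed.

Section Chain.
Variables (L : label_fun P) (v : P) (t : seq P).
Hypothesis inj : injective L.
Hypothesis hv : nat_of_ord (L v) = 0.
Hypothesis pc : promotion_chain L = v :: t.

Lemma pc_t : t = behead (chain_from L n v).
Proof. by rewrite -(pc_def inj hv) pc. Qed.

Lemma pc_path : path (srel L) v t.
Proof. rewrite pc_t; exact: chain_path. Qed.

Lemma pc_sorted : sorted (fun a b => (a < b)%O) (v :: t).
Proof. by apply: sub_path pc_path => a b; apply: srel_lt. Qed.

Lemma pc_uniq : uniq (v :: t).
Proof. exact: sorted_lt_uniq pc_sorted. Qed.

Lemma pc_last_max : maximal (last v t).
Proof.
have := chain_end L n v; rewrite -pc_t => -[|hs]; first exact: succ_None.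
by have := uniq_size pc_uniq; rewrite /= hs ltnn.
Qed.

Lemma hn : 0 < n.
Proof. by apply/card_gt0P; exists v. Qed.

Lemma promo_last : promotion L (last v t) = n.-1.
Proof.
rewrite /promotion pc mem_last.
have -> : index (last v t) (v :: t) = size t.
  by rewrite -[last v t](nth_last v (v :: t)) index_uniq ?pc_uniq.
by rewrite /= ltnn.
Qed.

Lemma G1 y : nat_of_ord (L y) = (promotion L (prev (v :: t) y)).+1 %% n.
Proof.
have U := pc_uniq.
have Lnz : y != v -> (L y).-1.+1 = L y.
  move=> yv; apply: prednK; rewrite lt0n; apply/negP => /eqP h.
  by move/negP: yv; apply; apply/eqP; apply: inj; apply: val_inj; rewrite /= h hv.
case yc: (y \in v :: t); last first.
  rewrite prev_nth yc /promotion pc yc Lnz ?modn_small //.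
  by apply/negP => /eqP e; move: yc; rewrite e inE eqxx.
case: (eqVneq y v) => [->|yv].
  have -> : prev (v :: t) v = last v t.
    rewrite prev_nth inE eqxx /=.
    have -> : index v t = size t by apply: memNindex; move: U => /= /andP[].
    exact: (nth_last v (v :: t)).
  by rewrite promo_last prednK ?hn // modnn hv.
have yt : y \in t by move: yc; rewrite inE (negbTE yv).
have -> : prev (v :: t) y = nth v (v :: t) (index y t) by rewrite prev_nth yc.
have it : index y t < size t by rewrite index_mem.
set w := nth v (v :: t) (index y t).
have wc : w \in v :: t by rewrite mem_nth // ltnS ltnW.
have iw : index w (v :: t) = index y t by rewrite index_uniq // ltnS ltnW.
rewrite /promotion pc wc iw ltnS it.
have -> : nth w (v :: t) (index y t).+1 = y by rewrite /= nth_index.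
by rewrite Lnz // modn_small.
Qed.

Lemma promo_lt x : promotion L x < n.
Proof.
rewrite /promotion; case: ifP => _; last by rewrite (leq_ltn_trans (leq_pred _)).
case: ifP => _; last by rewrite prednK ?hn.
by rewrite (leq_ltn_trans (leq_pred _)).
Qed.

Lemma promo_next x : nat_of_ord (L (next (v :: t) x)) = (promotion L x).+1 %% n.
Proof. by rewrite G1 prev_next // pc_uniq. Qed.

Lemma promo_inj : injective (promotion L).
Proof.
move=> a b e; apply: (can_inj (prev_next pc_uniq)); apply: inj; apply: val_inj.
by rewrite /= !promo_next e.
Qed.

End Chain.

Lemma chain_data L : 0 < n -> injective L ->
  exists v t, nat_of_ord (L v) = 0 /\ promotion_chain L = v :: t.
Proof.
move=> hn inj; have [v hv] := zero_ex hn inj; exists v, (behead (chain_from L n v)).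
by split => //; rewrite (pc_def inj hv); case: (n).
Qed.

Definition F L : label_fun P := [ffun x => odflt (L x) (insub (promotion L x))].

Lemma F_val L x : 0 < n -> injective L -> nat_of_ord (F L x) = promotion L x.
Proof.
move=> hn inj; have [v [t [hv pc]]] := chain_data hn inj.
by rewrite ffunE; case: insubP => [u _ -> //|]; rewrite (promo_lt L v).
Qed.

Lemma F_inj L : 0 < n -> injective L -> injective (F L).
Proof.
move=> hn inj; have [v [t [hv pc]]] := chain_data hn inj.
move=> a b e; apply: (promo_inj inj hv pc); rewrite -!F_val //; by rewrite e.
Qed.

Lemma F_top L r : 0 < n -> injective L -> (forall x, (x <= r)%O) ->
  nat_of_ord (F L r) = n.-1.
Proof.
move=> hn inj hr; have [v [t [hv pc]]] := chain_data hn inj.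
rewrite F_val //; have := pc_last_max inj hv pc.
have : (last v t <= r)%O := hr _.
rewrite le_eqVlt => /orP[/eqP <-|lr]; first by rewrite (promo_last inj hv pc).
by move/forallP/(_ r); rewrite lr.
Qed.

Definition pre L (c : seq P) : label_fun P := [ffun y => ordS (L (prev c y))].

Lemma pre_val L c y : nat_of_ord (pre L c y) = (L (prev c y)).+1 %% n.
Proof. by rewrite ffunE. Qed.

Lemma pre_inj L c : uniq c -> injective L -> injective (pre L c).
Proof.
move=> U inj a b; rewrite !ffunE => /(can_inj (@ordSK _)) /inj.
exact: (can_inj (next_prev U)).
Qed.

Lemma succ_mod a b : a < n -> b < n -> a.+1 %% n = b.+1 %% n -> a = b.
Proof.
move=> an bn; rewrite -[a.+1]addn1 -[b.+1]addn1 => /eqP; rewrite eqn_modDr !modn_small //.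
by move/eqP.
Qed.

Section Constr.
Variables (L : label_fun P) (v : P) (t : seq P).
Hypothesis inj : injective L.
Hypothesis srt : sorted (fun a b => (a < b)%O) (v :: t).
Hypothesis lmax : maximal (last v t).
Hypothesis Ltop : nat_of_ord (L (last v t)) = n.-1.
Hypothesis hpre : forall a, a \in v :: t -> a != last v t ->
  forall z, (a < z)%O -> L a < L z.

Let c := v :: t.
Let L' := pre L c.
Let U : uniq c := sorted_lt_uniq srt.

Let hn : 0 < n. Proof. by apply/card_gt0P; exists v. Qed.

Let lt1 w : w != last v t -> (L w).+1 < n.
Proof.
move=> wl.
have : (L w : nat) <= n.-1 by rewrite -ltnS prednK.
rewrite leq_eqVlt -Ltop => /orP[/eqP e|h].
  by move/negP: wl; case; apply/eqP; apply: inj; apply: val_inj.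
by rewrite (leq_ltn_trans h) // ltn_predL.
Qed.

Let notlast w : w != last v t -> (L w).+1 %% n = (L w).+1.
Proof. by move=> wl; rewrite modn_small // lt1. Qed.

Let lastc : last v t = nth v c (size t).
Proof. by rewrite (nth_last v c). Qed.

Let nlt i j : i < j -> j <= size t -> (nth v c i < nth v c j)%O.
Proof.
move=> ij js; apply: (sorted_ltn_nth lt_trans) => //; rewrite inE /= ?ltnS //.
exact: (leq_trans (ltnW ij) js).
Qed.

Let nthnl i : i < size t -> nth v c i != last v t.
Proof.
move=> it; rewrite lastc; apply/negP => /eqP e.
have := congr1 (index^~ c) e; rewrite !index_uniq //= ?ltnS ?(ltnW it) //.
by move=> h; move: it; rewrite h ltnn.
Qed.

Lemma L'v : nat_of_ord (L' v) = 0.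
Proof.
rewrite pre_val; have -> : prev c v = last v t.
  rewrite prev_nth inE eqxx /=.
  have -> : index v t = size t by apply: memNindex; move: U => /= /andP[].
  exact: (nth_last v c).
by rewrite Ltop prednK // modnn.
Qed.

Lemma pre_succ i : i < size t -> succ L' (nth v c i) = Some (nth v t i).
Proof.
move=> it.
have va : (v <= nth v c i)%O.
  case: (posnP i) => [->|ip] //; apply/ltW; exact: (nlt ip (ltnW it)).
set a := nth v c i; set b := nth v t i.
have bc : b = nth v c i.+1 by [].
have ab : (a < b)%O by rewrite bc nlt.
have anl : a != last v t by exact: nthnl.
have ac : a \in c by rewrite mem_nth // ltnS ltnW.
have pb : prev c b = a.
  have bv : b != v.
    apply/negP => /eqP e; have := congr1 (index^~ c) e.
    by rewrite bc index_uniq //= ?ltnS // eqxx.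
  rewrite prev_nth bc mem_nth /= ?ltnS //; congr nth.
  have := index_uniq v (s := c) (i := i.+1); rewrite -bc /= ltnS => /(_ it U).
  by rewrite eq_sym (negbTE bv) => -[].
apply: succ_Some => //; first exact: pre_inj.
move=> z az; rewrite !pre_val pb notlast //.
case zc: (z \in c); last first.
  have -> : prev c z = z by rewrite prev_nth zc.
  have zl : z != last v t by apply/negP => /eqP e; move: zc; rewrite e mem_last.
  by rewrite notlast // ltnS ltnW // hpre.
have zv : z != v.
  apply/negP => /eqP e; move: az; rewrite e => h.
  by have := lt_le_trans h va; rewrite ltxx.
have zt : z \in t by move: zc; rewrite inE (negbTE zv).
set j := index z t.
have jt : j < size t by rewrite index_mem.
have zn : z = nth v c j.+1 by rewrite /= nth_index.
have -> : prev c z = nth v c j by rewrite prev_nth zc.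
have ij : i <= j.
  rewrite leqNgt; apply/negP => ji; move: az; rewrite zn.
  rewrite leq_eqVlt in ji; case/orP: ji => [/eqP e|ji]; first by rewrite /a -e ltxx.
  by move=> h; have := lt_trans h (nlt ji (ltnW it)); rewrite ltxx.
rewrite leq_eqVlt in ij; case/orP: ij => [/eqP <-|ij] //.
rewrite !modn_small ?lt1 ?nthnl // ltnS ltnW // hpre // nlt // ltnW.
change (L a < (L (nth v c j)).+1 %% #|P|); rewrite modn_small ?lt1 ?nthnl // ltnS ltnW // hpre // nlt // ltnW.
all: by [].
Qed.



Lemma pre_chain : promotion_chain L' = c.
Proof.
rewrite (pc_def (pre_inj U inj) L'v); apply: chain_eq.
- apply/(pathP v) => i it; rewrite /srel pre_succ //.
- exact: max_succ.
- by have := uniq_size U; rewrite /= => /ltnW.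
Qed.

Lemma pre_promo x : promotion L' x = L x.
Proof.
have pc := pre_chain.
have inj' := pre_inj U inj.
apply: succ_mod; first exact: (promo_lt L' v); first exact: ltn_ord.
have := G1 inj' L'v pc (next c x); rewrite prev_next // => <-.
by rewrite pre_val prev_next.
Qed.

End Constr.

End Gen.


Section Tree.
Context {d : Order.disp_t} (P : finPOrderType d).
Local Notation n := #|P|.
Implicit Types (x y z : P).

Definition mu x := #|[set u : P | (u < x)%O]|.
Definition nu x := #|[set u : P | (x < u)%O]|.

Lemma mu_lt x y : (x < y)%O -> mu x < mu y.
Proof.
move=> xy; apply: proper_card; apply/properP; split.
  by apply/subsetP => u; rewrite !inE => ux; exact: lt_trans ux xy.
by exists x; rewrite !inE ?ltxx.
Qed.

Lemma nu_lt x y : (x < y)%O -> nu y < nu x.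
Proof.
move=> xy; apply: proper_card; apply/properP; split.
  by apply/subsetP => u; rewrite !inE => yu; exact: lt_trans xy yu.
by exists y; rewrite !inE ?ltxx.
Qed.

Lemma cover_ex x y : (x < y)%O -> exists w, covers x w /\ (w <= y)%O.
Proof.
move=> xy.
have p0 : (x < y)%O && (y <= y)%O by rewrite xy lexx.
case: (@arg_minnP _ y (fun w => (x < w)%O && (w <= y)%O) mu p0) => w /andP[xw wy] wm.
exists w; split=> //; rewrite /covers xw /=; apply/forallP => z; apply/negP => /andP[xz zw].
have := wm z; rewrite xz (ltW (lt_le_trans zw wy)) => /(_ isT).
by rewrite leqNgt mu_lt.
Qed.

Lemma max_above x : exists m, (x <= m)%O /\ maximal m.
Proof.
have p0 : (x <= x)%O by [].
case: (@arg_maxnP _ x (fun w => (x <= w)%O) mu p0) => m xm mm.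
exists m; split=> //; apply/forallP => y; apply/negP => my.
have h : mu y <= mu m := mm y (le_trans xm (ltW my)).
by have := mu_lt my; rewrite ltnNge h.
Qed.

Section Tr.
Hypothesis tree : [forall x : P, forall y : P, forall z : P,
   covers x y && covers x z ==> (y == z)].

Lemma comp_above k x : nu x < k -> forall y z, (x < y)%O -> (x < z)%O -> (y >=< z)%O.
Proof.
elim: k x => [|k IH] x // hk y z xy xz.
have [wy [cy wyy]] := cover_ex xy; have [wz [cz wzz]] := cover_ex xz.
have e : wy = wz by apply/eqP; move/forallP/(_ x)/forallP/(_ wy)/forallP/(_ wz): tree; rewrite cy cz.
subst wz; move: wyy wzz; rewrite !le_eqVlt => /orP[/eqP <-|wy1] /orP[/eqP <-|wz1].
- by rewrite comparablexx.
- by rewrite /Order.comparable (ltW wz1).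
- by rewrite /Order.comparable (ltW wy1) orbT.
apply: (IH wy) => //; move: hk; rewrite ltnS; apply: leq_trans; exact: nu_lt (andP cy).1.
Qed.

Lemma max_uniq x m1 m2 : (x <= m1)%O -> (x <= m2)%O -> maximal m1 -> maximal m2 -> m1 = m2.
Proof.
move=> h1 h2 /forallP M1 /forallP M2.
have key : forall a b : P, (a <= b)%O -> maximal a -> a = b.
  move=> a b; rewrite le_eqVlt => /orP[/eqP //|ab] /forallP/(_ b); by rewrite ab.
move: h1 h2; rewrite !le_eqVlt => /orP[/eqP e1|l1] /orP[/eqP e2|l2].
- by rewrite -e1 -e2.
- by subst; apply: key (ltW l2) _; apply/forallP.
- by subst; symmetry; apply: key (ltW l1) _; apply/forallP.
have := comp_above (ltnSn (nu x)) l1 l2; rewrite /Order.comparable => /orP[h|h].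
  by apply: key h _; apply/forallP.
by symmetry; apply: key h _; apply/forallP.
Qed.

Lemma root_ex : connected_poset P -> exists r, forall x, (x <= r)%O.
Proof.
case/andP=> /card_gt0P [x0 _] /forallP/(_ x0) /forallP conn.
have [m [x0m mm]] := max_above x0; exists m => y.
have /connectP [p pth ->] := conn y.
elim: p x0 x0m {conn} pth => [|b p IH] a am //= /andP[ab pth].
apply: IH pth; move: ab; rewrite /Order.comparable => /orP[ab|ba]; last exact: le_trans ba am.
have [mb [bmb mbm]] := max_above b.
by rewrite -(max_uniq (le_trans ab bmb) am mbm mm).
Qed.
End Tr.

Lemma top_max r : (forall x, (x <= r)%O) -> maximal r.
Proof. by move=> hr; apply/forallP => y; rewrite lt_leAnge hr andbF. Qed.

Lemma star_prop r : (forall x, (x <= r)%O) -> rooted_star_poset P ->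
  forall x y, x != r -> (x < y)%O -> y = r.
Proof.
move=> hr /andP[_ /existsP [r' /forallP h]].
have rr : r' = r.
  apply/eqP; apply/negP => /negP ne; have ne' : r != r' by rewrite eq_sym.
  have /andP[rr' _] := implyP (h r) ne'.
  by have := hr r'; rewrite (lt_geF rr').
subst r' => x y xr xy; have /andP[_ /forallP cv] := implyP (h x) xr.
have := hr y; rewrite le_eqVlt => /orP[/eqP //|yr].
by have := cv y; rewrite xy yr.
Qed.

Lemma nonstar r : (forall x, (x <= r)%O) -> rooted_tree_poset P -> ~~ rooted_star_poset P ->
  exists x p, (x < p)%O /\ (p < r)%O.
Proof.
move=> hr tr; rewrite /rooted_star_poset tr /= => /existsPn /(_ r) /forallPn [x].
rewrite negb_imply => /andP[xr].
have xlr : (x < r)%O by rewrite lt_neqAle xr hr.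
rewrite /covers xlr /= => /forallPn [z]; rewrite negbK => /andP[xz zr].
by exists x, z.
Qed.

End Tree.


Section LinExt.
Context {d : Order.disp_t} (P : finPOrderType d).
Local Notation n := #|P|.
Implicit Types (x y z : P).

Definition key x := mu x * n + enum_rank x.

Lemma key_lt x y : (x < y)%O -> key x < key y.
Proof.
move=> xy; have h := mu_lt xy; have e := ltn_ord (enum_rank x).
rewrite /key.
have h1 : mu x * n + enum_rank x < (mu x).+1 * n by rewrite mulSn addnC ltn_add2r.
have h2 : (mu x).+1 * n <= mu y * n by rewrite leq_mul2r h orbT.
exact: leq_trans h1 (leq_trans h2 (leq_addr _ _)).
Qed.

Lemma key_inj : injective key.
Proof.
move=> x y e; apply: enum_rank_inj; apply: val_inj.
have := congr1 (modn^~ n) e; rewrite /key !modnMDl !modn_small //.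
Qed.

Definition kset x := [set u : P | key u < key x].

Lemma kset_lt x : #|kset x| < n.
Proof.
rewrite -cardsT; apply: proper_card; apply/properP; split; first exact: subsetT.
by exists x; rewrite ?inE ?ltnn.
Qed.

Lemma kset_mono x y : key x < key y -> #|kset x| < #|kset y|.
Proof.
move=> xy; apply: proper_card; apply/properP; split.
  by apply/subsetP => u; rewrite !inE => ux; exact: ltn_trans ux xy.
by exists x; rewrite !inE ?ltnn.
Qed.

Definition L0 : label_fun P := [ffun x => Ordinal (kset_lt x)].

Lemma L0_mono x y : (x < y)%O -> L0 x < L0 y.
Proof. by move=> xy; rewrite !ffunE /= kset_mono // key_lt. Qed.

Lemma L0_inj : injective L0.
Proof.
move=> x y; rewrite !ffunE => -[] e; apply: key_inj.
case: (ltngtP (key x) (key y)) => // h.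
  by have := kset_mono h; rewrite e ltnn.
by have := kset_mono h; rewrite e ltnn.
Qed.

Lemma L0_top r : (forall x, (x <= r)%O) -> nat_of_ord (L0 r) = n.-1.
Proof.
move=> hr; rewrite ffunE /=; have -> : kset r = [set~ r]; last by rewrite cardsC1.
apply/setP => u; rewrite !inE.
case: (eqVneq u r) => [->|ur]; first by rewrite ltnn.
by rewrite key_lt // lt_neqAle ur hr.
Qed.

End LinExt.


Section Fib.
Context {d : Order.disp_t} (P : finPOrderType d).
Local Notation n := #|P|.
Local Notation Lam := (labelings P).
Implicit Types (x y z : P) (L : label_fun P).

Variable r : P.
Hypothesis hr : forall x, (x <= r)%O.

Let hn : 0 < n. Proof. by apply/card_gt0P; exists r. Qed.
Let rmax : maximal r := top_max hr.

Lemma inLam L : (L \in Lam) = injectiveb L.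
Proof. by rewrite inE. Qed.

Definition fset L := [set L' in Lam | F L' == L].

Lemma fibE L : promotion_fiber L = #|fset L|.
Proof.
congr #|pred_of_set _|; apply/setP => L'; rewrite !inE.
case h: (injectiveb L') => //=; move/injectiveP: h => h.
apply/forallP/eqP => [H|<- x]; last by rewrite F_val.
by apply/ffunP => x; apply: val_inj; rewrite /= F_val //; apply/eqP; exact: H.
Qed.

Lemma sum_fib : \sum_(L in Lam) promotion_fiber L = #|Lam|.
Proof.
rewrite -[RHS]sum1_card [RHS](partition_big (@F _ P) (mem Lam)) /=; last first.
  by move=> L; rewrite !inLam => /injectiveP h; apply/injectiveP; apply: F_inj.
apply: eq_bigr => L _; rewrite fibE -sum1_card; apply: eq_bigl => L'; by rewrite !inE.
Qed.

Lemma fib0 L : nat_of_ord (L r) != n.-1 -> promotion_fiber L = 0.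
Proof.
move=> h; rewrite fibE; apply/eqP; rewrite cards_eq0; apply/eqP/setP => L'.
rewrite !inE; apply/negP => /andP[/injectiveP inj /eqP e].
by move: h; rewrite -e F_top ?eqxx.
Qed.

Lemma pre_F L' : injective L' -> L' = pre (F L') (promotion_chain L').
Proof.
move=> inj; have [v [t [hv pc]]] := chain_data hn inj.
apply/ffunP => y; apply: val_inj; rewrite /= pre_val pc (G1 inj hv pc) F_val //.
Qed.

Lemma pre_in L v t : injective L -> sorted (fun a b => (a < b)%O) (v :: t) ->
  last v t = r -> nat_of_ord (L r) = n.-1 ->
  (forall a, a \in v :: t -> a != last v t -> forall z, (a < z)%O -> L a < L z) ->
  pre L (v :: t) \in fset L.
Proof.
move=> inj srt lr Lr hp.
have Ltop : nat_of_ord (L (last v t)) = n.-1 by rewrite lr.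
have lmax : maximal (last v t) by rewrite lr.
have inj' := pre_inj (sorted_lt_uniq srt) inj.
rewrite !inE; apply/andP; split; first by apply/injectiveP.
apply/eqP/ffunP => x; apply: val_inj; rewrite /= F_val //.
exact: (pre_promo inj srt lmax Ltop hp).
Qed.

Definition cS x := if x == r then [:: r] else [:: x; r].

Lemma cS_sorted x : sorted (fun a b => (a < b)%O) (cS x).
Proof.
rewrite /cS; case: (eqVneq x r) => [_|xr] //=.
by rewrite andbT lt_neqAle xr hr.
Qed.

Lemma cS_last x : last (head r (cS x)) (behead (cS x)) = r.
Proof. by rewrite /cS; case: (eqVneq x r). Qed.

Lemma cS_head x : head r (cS x) = x.
Proof. by rewrite /cS; case: (eqVneq x r) => [->|]. Qed.

Lemma cS_eq x : cS x = x :: behead (cS x).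
Proof. by rewrite /cS; case: (eqVneq x r) => [->|]. Qed.

Lemma pre_cS_zero L x : nat_of_ord (L r) = n.-1 -> nat_of_ord (pre L (cS x) x) = 0.
Proof.
move=> Lr; have := cS_last x; have := cS_sorted x; have E := cS_eq x.
set t := behead (cS x); rewrite E /= => srt lt.
by apply: L'v => //; rewrite lt.
Qed.

Lemma pre_cS_inj L : injective L -> nat_of_ord (L r) = n.-1 ->
  injective (fun x => pre L (cS x)).
Proof.
move=> inj Lr x y e.
have ix := pre_inj (sorted_lt_uniq (cS_sorted x)) inj.
apply: ix; apply: val_inj; rewrite /= pre_cS_zero // e pre_cS_zero //.
Qed.

Lemma lt_top L a : injective L -> nat_of_ord (L r) = n.-1 -> a != r -> L a < L r.
Proof.
move=> inj Lr ar; rewrite Lr.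
have : (L a : nat) <= n.-1 by rewrite -ltnS prednK.
rewrite leq_eqVlt -Lr => /orP[/eqP e|//].
by move/negP: ar; case; apply/eqP; apply: inj; apply: val_inj.
Qed.

Lemma fib_star L : rooted_star_poset P -> L \in Lam -> nat_of_ord (L r) = n.-1 ->
  promotion_fiber L = n.
Proof.
move=> star; rewrite inLam => /injectiveP inj Lr; rewrite fibE.
have -> : fset L = [set pre L (cS x) | x : P].
  apply/setP => L'; apply/idP/idP.
    rewrite !inE => /andP[/injectiveP inj' /eqP e].
    have [v [t [hv pc]]] := chain_data hn inj'.
    have pc2 : promotion_chain L' = cS v.
      rewrite (pc_def inj' hv) cS_eq; apply: chain_eq.
      - rewrite /cS; case: (eqVneq v r) => [_|vr] //=; rewrite andbT /srel.
        rewrite (@succ_Some _ _ L' v r inj') //; first by rewrite lt_neqAle vr hr.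
        by move=> z vz; rewrite (star_prop hr star vr vz).
      - by have := cS_last v; rewrite cS_head => ->; exact: max_succ.
      - by rewrite /cS; case: (eqVneq v r).
    by apply/imsetP; exists v => //; rewrite {1}(pre_F inj') pc2 e.
  case/imsetP => x _ ->; have E := cS_eq x; have := cS_last x; have := cS_sorted x.
  rewrite E /= => srt lr; apply: pre_in => //.
  move=> a ha; rewrite lr => ar z az.
  have ax : a = x.
    move: ha; rewrite -E /cS; case: (eqVneq x r) => _; rewrite !inE.
      by move=> /eqP e; move: ar; rewrite e eqxx.
    by case/orP => /eqP // e; move: ar; rewrite e eqxx.
  subst a; rewrite (star_prop hr star ar az); exact: lt_top.
by rewrite card_imset //; exact: pre_cS_inj.
Qed.

Lemma fib_nonstar x p : (x < p)%O -> (p < r)%O ->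
  n.+1 <= promotion_fiber (L0 P).
Proof.
move=> xp pr; rewrite fibE.
have Lr := L0_top hr.
have xr : (x < r)%O := lt_trans xp pr.
set c3 := [:: x; p; r].
have srt3 : sorted (fun a b => (a < b)%O) c3 by rewrite /= xp pr.
set A := [set pre (L0 P) (cS y) | y : P].
have sub : pre (L0 P) c3 |: A \subset fset (L0 P).
  apply/subsetP => L'; case/setU1P => [->|].
    apply: pre_in => //; first exact: L0_inj.
    by move=> a _ _ z az; apply: L0_mono.
  case/imsetP => y _ ->; have E := cS_eq y; have := cS_last y; have := cS_sorted y.
  rewrite E /= => srt lr; apply: pre_in => //; first exact: L0_inj.
  by move=> a _ _ z az; apply: L0_mono.
have nin : pre (L0 P) c3 \notin A.
  apply/imsetP => -[y _ e].
  have zx : nat_of_ord (pre (L0 P) c3 x) = 0 by apply: L'v.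
  have zy := pre_cS_zero y Lr.
  have yx : y = x.
    apply: (pre_inj (sorted_lt_uniq (cS_sorted y)) (@L0_inj _ P)).
    by apply: val_inj; rewrite /= zy -zx e.
  subst y.
  have e2 : nat_of_ord (pre (L0 P) c3 p) = nat_of_ord (pre (L0 P) (cS x) p) by rewrite e.
  move: e2; rewrite !pre_val => /(succ_mod (ltn_ord _) (ltn_ord _)) /val_inj /L0_inj.
  have -> : prev c3 p = x by rewrite /c3 /= eqxx.
  have -> : prev (cS x) p = p.
    rewrite /cS (lt_eqF xr) prev_nth !inE (gt_eqF xp) (lt_eqF pr) //.
  by move=> e2; move: xp; rewrite e2 ltxx.
have := subset_leq_card sub; rewrite cardsU1 nin card_imset //.
exact: pre_cS_inj (@L0_inj _ P) Lr.
Qed.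

End Fib.


Lemma sq_id a b : a ^ 2 + b ^ 2 = (a - b) ^ 2 + (b - a) ^ 2 + 2 * (b * a).
Proof. nia. Qed.

Section Count.
Context {d : Order.disp_t} (P : finPOrderType d).
Local Notation n := #|P|.
Local Notation Lam := (labelings P).
Implicit Types (x y z : P) (L : label_fun P).

Variable r : P.
Hypothesis hr : forall x, (x <= r)%O.

Let hn : 0 < n. Proof. by apply/card_gt0P; exists r. Qed.
Let hm : n.-1 < n. Proof. by rewrite ltn_predL. Qed.
Let m : 'I_n := Ordinal hm.

Definition Sk (k : 'I_n) := [set L in Lam | L r == k].

Definition sw (k i : 'I_n) := if i == k then m else if i == m then k else i.

Lemma swK k : involutive (sw k).
Proof.
move=> i; rewrite /sw; case: (eqVneq i k) => [->|ik].
  by case: (eqVneq m k) => [->|mk]; rewrite ?eqxx.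
case: (eqVneq i m) => [->|im]; first by rewrite eqxx.
by rewrite (negbTE ik) (negbTE im).
Qed.

Definition phi (k : 'I_n) L : label_fun P := [ffun x => sw k (L x)].

Lemma phiK k : involutive (phi k).
Proof. by move=> L; apply/ffunP => x; rewrite !ffunE swK. Qed.

Lemma Sk_le k a b : sw k a = b -> #|Sk a| <= #|Sk b|.
Proof.
move=> hab; rewrite -(card_imset _ (can_inj (phiK k))); apply: subset_leq_card.
apply/subsetP => L' /imsetP [L]; rewrite !inE => /andP[/injectiveP inj /eqP La] ->.
rewrite ffunE La hab eqxx andbT; apply/injectiveP => x y; rewrite !ffunE.
by move/(can_inj (swK k))/inj.
Qed.

Lemma Sk_eq k : #|Sk k| = #|Sk m|.
Proof.
apply/eqP; rewrite eqn_leq; apply/andP; split; apply: (Sk_le (k := k)).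
  by rewrite /sw eqxx.
rewrite /sw; case: (eqVneq m k) => [->|]; by rewrite ?eqxx.
Qed.

Lemma card_Lam : #|Lam| = n * #|Sk m|.
Proof.
rewrite -sum1_card (partition_big (fun L : label_fun P => L r) predT) //=.
rewrite (eq_bigr (fun _ => #|Sk m|)); first by rewrite sum_nat_const card_ord.
move=> k _; rewrite -(Sk_eq k) -sum1_card; apply: eq_bigl => L; by rewrite !inE.
Qed.

Lemma sum_restr (g : label_fun P -> nat) :
  (forall L, L \in Lam -> L r != m -> g L = 0) ->
  \sum_(L in Lam) g L = \sum_(L in Sk m) g L.
Proof.
move=> h; rewrite (bigID (fun L : label_fun P => L r == m)) /= [X in _ + X]big1 ?addn0.
  by apply: eq_bigl => L; rewrite !inE.
by move=> L /andP[]; apply: h.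
Qed.

Lemma Skm L : (L \in Sk m) = (L \in Lam) && (nat_of_ord (L r) == n.-1).
Proof. by rewrite !inE. Qed.

Lemma fib_out L : L \in Lam -> L r != m -> promotion_fiber L = 0.
Proof. by move=> _ h; apply: (fib0 hr). Qed.

Definition Dsum := \sum_(L in Sk m)
   ((promotion_fiber L - n) ^ 2 + (n - promotion_fiber L) ^ 2).

Lemma key_id : \sum_(L in Lam) promotion_fiber L ^ 2 = Dsum + n * #|Lam|.
Proof.
rewrite (sum_restr (g := fun L => promotion_fiber L ^ 2)); last first.
  by move=> L hL h; rewrite fib_out.
have s1 : \sum_(L in Sk m) promotion_fiber L = #|Lam|.
  by rewrite -(sum_fib r) (sum_restr (g := @promotion_fiber _ P)) // => L; apply: fib_out.
have : \sum_(L in Sk m) (promotion_fiber L ^ 2 + n ^ 2) =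
   \sum_(L in Sk m) ((promotion_fiber L - n) ^ 2 + (n - promotion_fiber L) ^ 2
       + 2 * (n * promotion_fiber L)).
  by apply: eq_bigr => L _; exact: sq_id.
rewrite !big_split /= -big_distrr /= -big_distrr /= s1 sum_nat_const -/Dsum.
rewrite card_Lam /Dsum big_split /= big1_eq.
set A := \sum_(i in _) _ ^ 2. set B := \sum_(i in _) (_ - _) ^ 2. set C := \sum_(i in _) (_ - _) ^ 2.
set u := #|P|; set s := #|Sk m|. rewrite (mulnC s u). set v := u * (u * s). lia.
Qed.

End Count.

End Helpers.
Import Helpers.

Local Open Scope ring_scope.

Theorem mainTheorem5 (d : Order.disp_t) (P : finPOrderType d) :
  rooted_tree_poset P ->
  ((#|P|%:R : rat) <= deg_promotion P /\
   (deg_promotion P = #|P|%:R <-> rooted_star_poset P)).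
Proof.
move=> tr; have [r hr] := root_ex (andP tr).2 (andP tr).1.
have hn : (0 < #|P|)%N by apply/card_gt0P; exists r.
have L0in : L0 P \in labelings P by rewrite inE; apply/injectiveP; exact: L0_inj.
have Npos : (0 < #|labelings P|)%N by apply/card_gt0P; exists (L0 P).
have NR : (#|labelings P|%:R : rat) != 0 by rewrite pnatr_eq0 -lt0n.
rewrite /deg_promotion (key_id hr) natrD natrM mulrDl mulfK //.
split; first by rewrite lerDr divr_ge0 // ler0n.
split.
  move=> h; apply/idPn => ns.
  have D0 : Dsum r = 0%N.
    move/eqP: h; rewrite -subr_eq0 addrK mulf_eq0 invr_eq0 (negbTE NR) orbF.
    by rewrite pnatr_eq0 => /eqP.
  have [x [p [xp pr]]] := nonstar hr tr ns.
  have hf := fib_nonstar hr xp pr.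
  have := Skm r (L0 P); rewrite L0in (L0_top hr) eqxx /= => mem.
  move: D0; rewrite /Dsum (bigD1 _ mem) /= => /eqP; rewrite addn_eq0 addn_eq0.
  case/andP=> /andP[/eqP e _] _; move: e => /eqP; rewrite expn_eq0 /= subn_eq0.
  by rewrite leqNgt hf.
move=> star; have D0 : Dsum r = 0%N.
  rewrite /Dsum /=; apply/eqP; rewrite sum_nat_eq0; apply/forall_inP => L.
  rewrite Skm => /andP[hL /eqP hLr]; rewrite (fib_star hr star hL hLr) subnn //.
by rewrite D0 mul0r add0r.
Qed.
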